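(* Let $n\geq 1$, let $c^S<\sup_{f\in\mathcal{P}}q(f)$ and $c^D\geq 0$, and let $\Gamma_1\subseteq\mathcal{P}^n$ be the fixed-window IPT acceptance region for $\mathbf{H}_1$ with parameters $(c^S,c^D)$ (defined in the context). Then $$P_\infty\left(\hat f_{X_1^n}\in\Gamma_1\right)\leq (n+1)^m\exp\left(-n\left(c^D+\frac{\left(\left(c^S-q_0\right)^+\right)^2}{2L^2}\right)\right).$$
   Context: Setup. Let $\mathcal{A}=\{a_1,\dots,a_m\}$ be a finite alphabet and $\mathcal{P}$ the set of probability mass functions (p.m.f.s) on $\mathcal{A}$, with the $\ell_1$ norm $\|f-f'\|_1=\sum_a|f(a)-f'(a)|$. $I(f\|f')=\sum_{a}f(a)\log\frac{f(a)}{f'(a)}$ is the Kullback–Leibler divergence (natural logarithm, $0\log 0=0$). A known pre-change p.m.f. $f_0\in\mathcal{P}$ is fixed. $q:\mathcal{P}\to\mathbb{R}$ is quasiconcave and $L$-Lipschitz with respect to $\ell_1$ (i.e. $|q(f)-q(f')|\leq L\|f-f'\|_1$), with $q_0:=q(f_0)<0<\underline{q}$, and the set of possible post-change p.m.f.s $\mathcal{P}_1$ is a nonempty subset of $\{f: q(f)\geq\underline{q}\}$. Observations $X_1,X_2,\dots$ take values in $\mathcal{A}$; under $P_{f_1,t_1}$ ($f_1\in\mathcal{P}_1$, $t_1\geq 1$) the variables $X_1,\dots,X_{t_1-1}$ are i.i.d. $f_0$ and $X_{t_1},X_{t_1+1},\dots$ are i.i.d. $f_1$, independent of the former; $P_\infty$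 denotes the law under which all $X_k$ are i.i.d. $f_0$. For $i\leq j$, $\hat f_{X_i^j}(a)=\frac{1}{j-i+1}\#\{i\leq k\leq j: X_k=a\}$ is the empirical p.m.f., and $\mathcal{P}^n$ is the (finite) set of p.m.f.s realizable as empirical p.m.f.s of $n$ letters of $\mathcal{A}$. $(x)^+=\max\{x,0\}$. Fixed-window IPT. Given $c=(c^S,c^D)$ with $c^D\geq0$ and $c^S<\sup_f q(f)$, let $f^*=\arg\min_{f\in\mathcal{P}:\,q(f)\geq c^S}I(f\|f_0)$ be the I-projection of $f_0$ onto the closed convex set $\{q\geq c^S\}$. For sample size $n$, set $\Gamma_1=\{f\in\mathcal{P}^n: q(f)\geq c^S\text{ and } I(f\|f^* )\geq c^D\}$ and $\Gamma_0=\mathcal{P}^n\setminus\Gamma_1$; the test declares $\mathbf{H}_1$ (change/alternative) iff $\hat f_{X_1^n}\in\Gamma_1$. *)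

(* Defs.v *)
(* classical reals. Alphabet A = {0,...,m-1} (letters are nats < m). *)
From Stdlib Require Import Reals Lra List Classical ClassicalDescription.
Import ListNotations.
Open Scope R_scope.

Fixpoint sumR (m : nat) (F : nat -> R) : R :=
  match m with O => 0 | S k => sumR k F + F k end.

(* p.m.f. on the alphabet {0,...,m-1} (values at a >= m are irrelevant) *)
Definition pmf (m : nat) (f : nat -> R) : Prop :=
  (forall a, (a < m)%nat -> 0 <= f a) /\ sumR m f = 1.

Definition l1 (m : nat) (f g : nat -> R) : R := sumR m (fun a => Rabs (f a - g a)).

(* support condition: f << g on the alphabet *)
Fixpoint abs_cont (m : nat) (f g : nat -> R) : bool :=
  match m with
  | O => true
  | S k => abs_cont k f g &&
           (if Req_EM_T (g k) 0 then (if Req_EM_T (f k) 0 then true else false) else true)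
  end.

Definition kl_term (x y : R) : R := if Req_EM_T x 0 then 0 else x * ln (x / y).

(* KL divergence I(f||g), with None = +infinity *)
Definition KL (m : nat) (f g : nat -> R) : option R :=
  if abs_cont m f g then Some (sumR m (fun a => kl_term (f a) (g a))) else None.

Definition ext_le (u v : option R) : Prop :=
  match u, v with
  | _, None => True
  | None, Some _ => False
  | Some x, Some y => x <= y
  end.

Definition KL_ge (m : nat) (f g : nat -> R) (c : R) : Prop := ext_le (Some c) (KL m f g).

Definition quasiconcave (m : nat) (q : (nat -> R) -> R) : Prop :=
  forall f g lam, pmf m f -> pmf m g -> 0 <= lam <= 1 ->
    Rmin (q f) (q g) <= q (fun a => lam * f a + (1 - lam) * g a).

Definition lipschitz (m : nat) (q : (nat -> R) -> R) (L : R) : Prop :=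
  forall f g, pmf m f -> pmf m g -> Rabs (q f - q g) <= L * l1 m f g.

Definition is_Iproj (m : nat) (q : (nat -> R) -> R) (cS : R) (f0 fstar : nat -> R) : Prop :=
  pmf m fstar /\ cS <= q fstar /\
  forall f, pmf m f -> cS <= q f -> ext_le (KL m fstar f0) (KL m f f0).

Fixpoint count (a : nat) (x : list nat) : nat :=
  match x with [] => O | b :: y => if Nat.eqb b a then S (count a y) else count a y end.
Definition emp (x : list nat) : nat -> R := fun a => INR (count a x) / INR (length x).

Definition Gamma1 (m : nat) (q : (nat -> R) -> R) (cS cD : R) (fstar : nat -> R)
  (f : nat -> R) : Prop := cS <= q f /\ KL_ge m f fstar cD.

Fixpoint words (m n : nat) : list (list nat) :=
  match n with
  | O => [[]]
  | S k => flat_map (fun w => map (fun a => a :: w) (seq 0 m)) (words m k)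
  end.

Definition word_prob (f0 : nat -> R) (w : list nat) : R :=
  fold_right (fun a acc => f0 a * acc) 1 w.

Definition indic (P : Prop) : R := if excluded_middle_informative P then 1 else 0.

Definition Pinf (m n : nat) (f0 : nat -> R) (E : (nat -> R) -> Prop) : R :=
  fold_right Rplus 0 (map (fun w => word_prob f0 w * indic (E (emp w))) (words m n)).

(* Main.v *)
Require Import Defs.
From Stdlib Require Import Reals Lra Lia List Classical ClassicalDescription.
From Coquelicot Require Coquelicot.
Import ListNotations.
Open Scope R_scope.
Module CalcPart.
Import Coquelicot.Coquelicot.

Lemma mvt01 (f f' : R -> R) :
  (forall x, 0 < x -> is_derive f x (f' x)) ->
  forall u, 0 < u -> exists c, 0 < c /\ (c - 1) * (u - 1) >= 0 /\ f u - f 1 = f' c * (u - 1).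
Proof.
  intros Hd u Hu.
  destruct (MVT_gen f 1 u f') as [c [Hc Heq]].
  - intros x Hx. apply Hd. destruct Hx as [Hx _].
    eapply Rle_lt_trans; [|exact Hx]. apply Rmin_glb; lra.
  - intros x Hx. apply derivable_continuous_pt. exists (f' x). apply is_derive_Reals. apply Hd.
    destruct Hx as [Hx _]. eapply Rlt_le_trans; [|exact Hx]. apply Rmin_glb_lt; lra.
  - exists c. destruct (Rle_dec 1 u).
    + rewrite Rmin_left in Hc by lra. rewrite Rmax_right in Hc by lra.
      split; [lra|split; [nra|exact Heq]].
    + rewrite Rmin_right in Hc by lra. rewrite Rmax_left in Hc by lra.
      split; [lra|split; [nra|exact Heq]].
Qed.

Definition hh (x : R) := ln x - 2 * (x - 1) / (x + 1).

Lemma hh_sign u : 0 < u -> (u - 1) * hh u >= 0.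
Proof.
  intros Hu.
  destruct (mvt01 hh (fun x => / x - 4 / (x + 1) ^ 2)) with (u := u) as [c [Hc [Hcu Heq]]]; auto.
  - intros x Hx. unfold hh. auto_derive.
    + repeat split; lra.
    + field. lra.
  - assert (hh 1 = 0) by (unfold hh; rewrite ln_1; field).
    assert (Hp : / c - 4 / (c + 1) ^ 2 = (c - 1) ^ 2 / (c * (c + 1) ^ 2)) by (field; lra).
    assert (0 <= (c - 1) ^ 2 / (c * (c + 1) ^ 2)).
    { unfold Rdiv. apply Rmult_le_pos; [apply pow2_ge_0|]. left; apply Rinv_0_lt_compat.
      apply Rmult_lt_0_compat; [lra| apply pow_lt; lra]. }
    rewrite Hp in Heq. rewrite H in Heq.
    assert (hh u = (c - 1) ^ 2 / (c * (c + 1) ^ 2) * (u - 1)) by lra.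
    rewrite H1. apply Rle_ge.
    replace ((u - 1) * ((c - 1) ^ 2 / (c * (c + 1) ^ 2) * (u - 1))) with
      ((c - 1) ^ 2 / (c * (c + 1) ^ 2) * ((u - 1) * (u - 1))) by ring.
    apply Rmult_le_pos; [assumption| apply Rle_0_sqr].
Qed.

Definition FF (x : R) := (2 * x + 4) * (x * ln x - x + 1) - 3 * (x - 1) ^ 2.

Lemma FF_pos u : 0 < u -> 0 <= FF u.
Proof.
  intros Hu.
  destruct (mvt01 FF (fun x => 4 * (x + 1) * hh x)) with (u := u) as [c [Hc [Hcu Heq]]]; auto.
  - intros x Hx. unfold FF, hh. auto_derive.
    + lra.
    + field. lra.
  - assert (FF 1 = 0) by (unfold FF; rewrite ln_1; ring).
    pose proof (hh_sign c Hc).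
    destruct (Req_dec c 1) as [->|Hc1].
    + assert (hh 1 = 0) by (unfold hh; rewrite ln_1; field). rewrite H1 in Heq. nra.
    + assert (0 <= hh c * (u - 1)).
      { assert (0 < (c-1)^2) by (apply pow2_gt_0 || nra; lra).
        assert (0 <= hh c * (u - 1) * (c-1)^2) by nra. nra. }
      nra.
Qed.


End CalcPart.

Lemma sumR_plus m F G : sumR m (fun a => F a + G a) = sumR m F + sumR m G.
Proof. induction m; simpl; [ring| rewrite IHm; ring]. Qed.
Lemma sumR_scal m c F : sumR m (fun a => c * F a) = c * sumR m F.
Proof. induction m; simpl; [ring| rewrite IHm; ring]. Qed.
Lemma sumR_minus m F G : sumR m (fun a => F a - G a) = sumR m F - sumR m G.
Proof. induction m; simpl; [ring| rewrite IHm; ring]. Qed.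
Lemma sumR_ext m F G : (forall a, (a < m)%nat -> F a = G a) -> sumR m F = sumR m G.
Proof. induction m; intros H; simpl; [reflexivity|]. rewrite IHm, H; auto. Qed.
Lemma sumR_le m F G : (forall a, (a < m)%nat -> F a <= G a) -> sumR m F <= sumR m G.
Proof. induction m; intros H; simpl; [lra|]. pose proof (IHm (fun a h => H a (Nat.lt_lt_succ_r _ _ h))). pose proof (H m (Nat.lt_succ_diag_r m)). lra. Qed.
Lemma sumR_nonneg m F : (forall a, (a < m)%nat -> 0 <= F a) -> 0 <= sumR m F.
Proof. intros H. replace 0 with (sumR m (fun _ => 0)). apply sumR_le; auto.
  induction m; simpl; auto. rewrite IHm; [ring|auto]. Qed.
Lemma sumR_zero_each m F : (forall a, (a < m)%nat -> 0 <= F a) -> sumR m F <= 0 ->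
  forall a, (a < m)%nat -> F a = 0.
Proof. induction m; intros H Hs a Ha; [lia|]. simpl in Hs.
  assert (0 <= sumR m F) by (apply sumR_nonneg; auto).
  assert (0 <= F m) by auto.
  destruct (Nat.eq_dec a m) as [->|Hne]; [lra|]. apply IHm; auto; lra || lia. Qed.

Lemma abs_cont_iff m f g : abs_cont m f g = true <-> (forall a, (a < m)%nat -> g a = 0 -> f a = 0).
Proof.
  induction m; simpl.
  - split; auto. intros _ a Ha. lia.
  - rewrite Bool.andb_true_iff, IHm. split.
    + intros [H1 H2] a Ha Hg. destruct (Nat.eq_dec a m) as [->|Hne].
      * destruct (Req_EM_T (g m) 0); [|contradiction]. destruct (Req_EM_T (f m) 0); auto; try discriminate.
      * apply H1; auto; lia.
    + intros H. split. intros a Ha; apply H; lia.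
      destruct (Req_EM_T (g m) 0); auto; destruct (Req_EM_T (f m) 0); auto; exfalso; apply n; apply H; auto.
Qed.

Lemma KL_some m f g D : KL m f g = Some D ->
  (forall a, (a < m)%nat -> g a = 0 -> f a = 0) /\ D = sumR m (fun a => kl_term (f a) (g a)).
Proof. unfold KL. destruct (abs_cont m f g) eqn:E; intros H; inversion H. split; auto. apply abs_cont_iff; auto. Qed.

Lemma KL_of m f g : (forall a, (a < m)%nat -> g a = 0 -> f a = 0) ->
  KL m f g = Some (sumR m (fun a => kl_term (f a) (g a))).
Proof. intros H. unfold KL. apply abs_cont_iff in H. rewrite H. reflexivity. Qed.

Lemma lnd x y : 0 < x -> 0 < y -> ln (x / y) = ln x - ln y.
Proof. intros. unfold Rdiv. rewrite ln_mult, ln_Rinv; auto; try lra. apply Rinv_0_lt_compat; auto. Qed.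

Lemma ln_le_xm1 x : 0 < x -> ln x <= x - 1.
Proof. intros H. pose proof (exp_ineq1_le (ln x)). rewrite exp_ln in H0; auto. lra. Qed.

Lemma ln_ge_1m x : 0 < x -> 1 - / x <= ln x.
Proof. intros H. pose proof (ln_le_xm1 (/ x) (Rinv_0_lt_compat _ H)). rewrite ln_Rinv in H0; auto. lra. Qed.

Lemma kl_term0 y : kl_term 0 y = 0.
Proof. unfold kl_term. destruct (Req_EM_T 0 0); [reflexivity|congruence]. Qed.
Lemma kl_termP x y : x <> 0 -> kl_term x y = x * ln (x / y).
Proof. unfold kl_term. destruct (Req_EM_T x 0); [congruence|reflexivity]. Qed.


Lemma amgm lam a b c : 0 < a -> c^2 <= a * b -> 2 * lam * c <= lam^2 * a + b.
Proof.
  intros Ha H.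
  assert (a * (lam^2 * a + b - 2 * lam * c) = (lam * a - c)^2 + (a * b - c^2)) by ring.
  assert (0 <= a * (lam^2 * a + b - 2 * lam * c)) by (rewrite H0; apply Rplus_le_le_0_compat; [apply pow2_ge_0|lra]).
  assert (0 <= lam^2 * a + b - 2 * lam * c).
  { destruct (Rle_lt_dec 0 (lam^2 * a + b - 2 * lam * c)); auto. nra. }
  lra.
Qed.

Lemma pin_pt y g lam : 0 <= y -> 0 <= g -> (y = 0 -> g = 0) ->
  2 * lam * Rabs (g - y) <= lam^2 * ((2 * g + 4 * y) / 3) + (kl_term g y - g + y).
Proof.
  intros Hy Hg Hyg.
  destruct (Req_EM_T y 0) as [Hy0|Hy0].
  - rewrite (Hyg Hy0), Hy0, kl_term0. rewrite Rminus_0_r, Rabs_R0. lra.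
  - assert (Hyp : 0 < y) by lra.
    apply amgm; [lra|]. rewrite <- Rsqr_pow2, <- Rsqr_abs, Rsqr_pow2.
    destruct (Req_EM_T g 0) as [Hg0|Hg0].
    + rewrite Hg0, kl_term0. nra.
    + rewrite kl_termP by auto. assert (Hgp : 0 < g) by lra.
      set (u := g / y). assert (Hu : 0 < u) by (unfold u; apply Rdiv_lt_0_compat; lra).
      assert (Hg' : g = u * y) by (unfold u; field; lra).
      pose proof (CalcPart.FF_pos u Hu) as HF. unfold CalcPart.FF in HF.
      clearbody u. subst g.
      assert (((2 * (u * y) + 4 * y) / 3) * (u * y * ln u - u * y + y)
              = y^2 / 3 * ((2 * u + 4) * (u * ln u - u + 1))) by (field).
      rewrite H. assert ((u * y - y) ^ 2 = y^2 / 3 * (3 * (u - 1)^2)) by field.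
      rewrite H0. apply Rmult_le_compat_l; [|lra].
      apply Rmult_le_pos; [apply pow2_ge_0|lra].
Qed.

Lemma pinsker m g y Dg : pmf m g -> pmf m y -> KL m g y = Some Dg -> l1 m g y ^ 2 / 2 <= Dg.
Proof.
  intros [Hg0 Hg1] [Hy0 Hy1] HK. apply KL_some in HK as [Hac HD].
  set (lam := l1 m g y / 2).
  assert (H : sumR m (fun a => 2 * lam * Rabs (g a - y a)) <=
              sumR m (fun a => lam^2 * ((2 * g a + 4 * y a) / 3) + (kl_term (g a) (y a) - g a + y a))).
  { apply sumR_le. intros a Ha. apply pin_pt; auto. }
  rewrite sumR_scal in H. rewrite sumR_plus, sumR_plus, sumR_minus in H.
  replace (sumR m (fun a => lam ^ 2 * ((2 * g a + 4 * y a) / 3))) with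
     (lam^2 * ((2 * sumR m g + 4 * sumR m y) / 3)) in H.
  2:{ transitivity (sumR m (fun a => (lam^2*2/3) * g a + (lam^2*4/3) * y a)).
      - rewrite sumR_plus, !sumR_scal. field.
      - apply sumR_ext; intros; field. }
  fold (l1 m g y) in H. rewrite <- HD, Hg1, Hy1 in H. unfold lam in H. nra.
Qed.


Definition Bt y f g := if Req_EM_T y 0 then 0 else if Req_EM_T g 0 then kl_term f y else (f - g) * ln (g / y).
Definition Ct y f g := if Req_EM_T y 0 then 0 else if Req_EM_T g 0 then 0 else 2 * (f - g)^2 / g.
Definition St y f g := if Req_EM_T y 0 then 0 else if Req_EM_T g 0 then f else 0.

Lemma dlog_bound d g x t : 0 < g -> 0 < x -> x = g + t * d -> 0 < t <= /2 -> d >= - g ->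
  d * ln (x / g) <= 2 * t * d^2 / g.
Proof.
  intros Hg Hx Hxd Ht Hd.
  assert (Hu : 0 < x / g) by (apply Rdiv_lt_0_compat; lra).
  assert (Hu1 : x / g - 1 = t * d / g) by (rewrite Hxd; field; lra).
  destruct (Rle_lt_dec 0 d).
  - pose proof (ln_le_xm1 _ Hu).
    assert (d * ln (x / g) <= d * (t * d / g)) by (apply Rmult_le_compat_l; lra).
    assert (d * (t * d / g) <= 2 * t * d^2 / g).
    { unfold Rdiv. assert (0 <= t * d^2 * / g) by (apply Rmult_le_pos; [apply Rmult_le_pos; [lra|apply pow2_ge_0]|left; apply Rinv_0_lt_compat; lra]). nra. }
    lra.
  - pose proof (ln_ge_1m _ Hu).
    assert (Hug : x / g >= /2).
    { apply Rle_ge. apply (Rmult_le_reg_r g); [lra|]. unfold Rdiv. rewrite Rmult_assoc, Rinv_l by lra. nra. }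
    assert (d * ln (x / g) <= d * (1 - / (x / g))) by (apply Rmult_le_compat_neg_l; lra).
    assert (1 - / (x / g) = (x / g - 1) / (x / g)) by (field; lra).
    rewrite H1, Hu1 in H0.
    assert (d * (t * d / g / (x / g)) = (t * d^2 / g) * / (x/g)) by (field; lra).
    rewrite H2 in H0.
    assert (/ (x / g) <= 2).
    { replace 2 with (/ / 2) by (field). apply Rinv_le_contravar; lra. }
    assert (0 <= t * d^2 / g) by (unfold Rdiv; apply Rmult_le_pos; [apply Rmult_le_pos; [lra|apply pow2_ge_0]|left; apply Rinv_0_lt_compat; lra]).
    assert (t * d ^ 2 / g * / (x / g) <= t * d^2 / g * 2) by (apply Rmult_le_compat_l; auto).
    assert (2 * t * d ^ 2 / g = t * d ^ 2 / g * 2) by (field; lra). lra.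
Qed.

Lemma pw y f g t : 0 <= y -> 0 <= f -> 0 <= g -> (y = 0 -> f = 0 /\ g = 0) -> 0 < t <= /2 ->
  kl_term (t * f + (1 - t) * g) y - kl_term g y <=
  t * ((f - g) + (Bt y f g + t * Ct y f g + St y f g * ln t)).
Proof.
  intros Hy Hf Hg Hyfg Ht. unfold Bt, Ct, St.
  destruct (Req_EM_T y 0) as [Hy0|Hy0].
  - destruct (Hyfg Hy0) as [-> ->]. replace (t * 0 + (1 - t) * 0) with 0 by ring.
    rewrite kl_term0. lra.
  - assert (Hyp : 0 < y) by lra.
    destruct (Req_EM_T g 0) as [Hg0|Hg0].
    + subst g. replace (t * f + (1 - t) * 0) with (t * f) by ring. rewrite kl_term0.
      destruct (Req_EM_T f 0) as [Hf0|Hf0].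
      * subst f. replace (t * 0) with 0 by ring. rewrite kl_term0. lra.
      * assert (0 < f) by lra. rewrite !kl_termP by (try apply Rmult_integral_contrapositive; lra).
        rewrite !lnd by (try apply Rmult_lt_0_compat; lra). rewrite ln_mult by lra. nra.
    + assert (Hgp : 0 < g) by lra.
      set (x := t * f + (1 - t) * g).
      assert (Hx : 0 < x) by (unfold x; nra).
      rewrite !kl_termP by lra.
      assert (Htan : g * ln (g / x) >= g - x).
      { pose proof (ln_ge_1m (g / x) (Rdiv_lt_0_compat _ _ Hgp Hx)).
        assert (/ (g / x) = x / g) by (field; lra). rewrite H0 in H.
        assert (g * (1 - x / g) <= g * ln (g / x)) by (apply Rmult_le_compat_l; lra).
        assert (g * (1 - x / g) = g - x) by (field; lra). lra. }
      rewrite lnd in Htan by lra. rewrite !lnd by lra.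
      pose proof (dlog_bound (f - g) g x t Hgp Hx ltac:(unfold x; ring) Ht ltac:(lra)) as Hdl.
      rewrite lnd in Hdl by lra.
      assert (x - g = t * (f - g)) by (unfold x; ring).
      assert (x * (ln x - ln y) - g * (ln g - ln y) <= (x - g) * (ln x - ln y + 1)) by nra.
      rewrite H in H0.
      assert (Hsplit : (f - g) * (ln x - ln y) = (f - g) * (ln x - ln g) + (f - g) * (ln g - ln y)) by ring.
      assert (Heq : 2 * (f - g) ^ 2 / g = 2 * (f-g)^2 / g) by reflexivity.
      assert (t * (f - g) * (ln x - ln y + 1) <=
              t * (f - g + ((f - g) * (ln g - ln y) + t * (2 * (f - g) ^ 2 / g) + 0 * ln t))).
      { replace (t * (f - g) * (ln x - ln y + 1)) with (t * ((f - g) * (ln x - ln y + 1))) by ring.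
        apply Rmult_le_compat_l; [lra|].
        assert (2 * t * (f - g) ^ 2 / g = t * (2 * (f - g) ^ 2 / g)) by (field; lra). lra. }
      lra.
Qed.


Lemma lnle x y : 0 < x -> x <= y -> ln x <= ln y.
Proof. intros H1 H2. destruct H2 as [H2| ->]; [left; apply ln_increasing; auto|lra]. Qed.

Lemma limit_arg B C s : 0 <= C -> 0 <= s -> (forall t, 0 < t <= /2 -> 0 <= B + t * C + s * ln t) ->
  s = 0 /\ 0 <= B.
Proof.
  intros HC Hs H.
  assert (Hs0 : s = 0).
  { destruct (Req_EM_T s 0) as [|Hne]; auto. exfalso.
    set (M := (Rabs B + 2) / s).
    set (t := Rmin (/2) (Rmin (/ (C + 1)) (exp (- M)))).
    assert (Ht0 : 0 < t).
    { unfold t. apply Rmin_glb_lt; [lra|]. apply Rmin_glb_lt; [apply Rinv_0_lt_compat; lra|apply exp_pos]. }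
    assert (Ht1 : t <= /2) by apply Rmin_l.
    assert (Ht2 : t <= / (C + 1)) by (unfold t; eapply Rle_trans; [apply Rmin_r|apply Rmin_l]).
    assert (Ht3 : t <= exp (- M)) by (unfold t; eapply Rle_trans; [apply Rmin_r|apply Rmin_r]).
    pose proof (H t (conj Ht0 Ht1)) as Hb.
    assert (ln t <= - M) by (rewrite <- (ln_exp (- M)); apply lnle; auto).
    assert (s * ln t <= - (Rabs B + 2)).
    { assert (s * ln t <= s * (- M)) by (apply Rmult_le_compat_l; lra).
      assert (s * - M = - (Rabs B + 2)) by (unfold M; field; lra). lra. }
    assert (t * C < 1).
    { assert (t * (C + 1) <= / (C + 1) * (C + 1)) by (apply Rmult_le_compat_r; lra).
      rewrite Rinv_l in H2 by lra. nra. }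
    pose proof (Rle_abs B). pose proof (Rle_abs (- B)). rewrite Rabs_Ropp in H4. lra. }
  split; auto. subst s.
  destruct (Rle_lt_dec 0 B); auto. exfalso.
  set (t := Rmin (/2) (- B / (2 * (C + 1)))).
  assert (Ht0 : 0 < t).
  { unfold t. apply Rmin_glb_lt; [lra|]. apply Rdiv_lt_0_compat; lra. }
  pose proof (H t (conj Ht0 (Rmin_l _ _))) as Hb.
  assert (t <= - B / (2 * (C + 1))) by apply Rmin_r.
  assert (t * (C + 1) <= - B / 2).
  { assert (t * (C + 1) <= - B / (2 * (C + 1)) * (C + 1)) by (apply Rmult_le_compat_r; lra).
    assert (- B / (2 * (C + 1)) * (C + 1) = - B / 2) by (field; lra). lra. }
  nra.
Qed.

Lemma ident y f g : 0 <= y -> 0 <= f -> 0 <= g -> (y = 0 -> f = 0 /\ g = 0) -> (g = 0 -> f = 0) ->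
  kl_term f y = kl_term g y + kl_term f g + Bt y f g.
Proof.
  intros Hy Hf Hg Hyfg Hgf. unfold Bt.
  destruct (Req_EM_T y 0) as [Hy0|Hy0].
  - destruct (Hyfg Hy0) as [-> ->]. rewrite !kl_term0. ring.
  - destruct (Req_EM_T g 0) as [Hg0|Hg0].
    + rewrite (Hgf Hg0), Hg0, !kl_term0. ring.
    + destruct (Req_EM_T f 0) as [Hf0|Hf0].
      * subst f. rewrite !kl_term0, kl_termP by auto. rewrite lnd by lra. ring.
      * rewrite !kl_termP by auto. rewrite !lnd by lra. ring.
Qed.

Lemma pyth m y g f D Dg : pmf m y -> pmf m g -> pmf m f ->
  KL m f y = Some D -> KL m g y = Some Dg ->
  (forall t, 0 < t <= /2 -> ext_le (Some Dg) (KL m (fun a => t * f a + (1 - t) * g a) y)) ->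
  exists Dfg, KL m f g = Some Dfg /\ Dg + Dfg <= D.
Proof.
  intros [Hy0 Hy1] [Hg0 Hg1] [Hf0 Hf1] HKf HKg Hmin.
  apply KL_some in HKf as [Hacf HD]. apply KL_some in HKg as [Hacg HDg].
  assert (Hyfg : forall a, (a < m)%nat -> y a = 0 -> f a = 0 /\ g a = 0) by auto.
  assert (Hsum : forall t, 0 < t <= /2 ->
    0 <= sumR m (fun a => Bt (y a) (f a) (g a)) + t * sumR m (fun a => Ct (y a) (f a) (g a))
         + sumR m (fun a => St (y a) (f a) (g a)) * ln t).
  { intros t Ht. specialize (Hmin t Ht).
    rewrite KL_of in Hmin.
    2:{ intros a Ha Hya. destruct (Hyfg a Ha Hya) as [-> ->]. ring. }
    simpl in Hmin.
    assert (Hs : sumR m (fun a => kl_term (t * f a + (1 - t) * g a) (y a) - kl_term (g a) (y a)) <=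
      sumR m (fun a => t * ((f a - g a) + (Bt (y a) (f a) (g a) + t * Ct (y a) (f a) (g a)
                + St (y a) (f a) (g a) * ln t)))).
    { apply sumR_le. intros a Ha. apply pw; auto. }
    rewrite sumR_minus, sumR_scal, !sumR_plus, sumR_minus, sumR_scal in Hs.
    replace (sumR m (fun a => St (y a) (f a) (g a) * ln t)) with
      (sumR m (fun a => St (y a) (f a) (g a)) * ln t) in Hs.
    2:{ rewrite Rmult_comm, <- sumR_scal. apply sumR_ext; intros; ring. }
    rewrite Hf1, Hg1, <- HDg in Hs.
    set (B := sumR m (fun a => Bt (y a) (f a) (g a))) in *.
    set (C := sumR m (fun a => Ct (y a) (f a) (g a))) in *.
    set (S := sumR m (fun a => St (y a) (f a) (g a))) in *.

    assert (0 <= t * (1 - 1 + (B + t * C + S * ln t))) by lra.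
    destruct (Rle_lt_dec 0 (B + t * C + S * ln t)); auto. nra. }
  assert (HC : 0 <= sumR m (fun a => Ct (y a) (f a) (g a))).
  { apply sumR_nonneg. intros a Ha. unfold Ct.
    destruct (Req_EM_T (y a) 0); [lra|]. destruct (Req_EM_T (g a) 0); [lra|].
    assert (0 < g a) by (pose proof (Hg0 a Ha); lra).
    unfold Rdiv. apply Rmult_le_pos; [apply Rmult_le_pos; [lra|apply pow2_ge_0]|left; apply Rinv_0_lt_compat; auto]. }
  assert (HSn : forall a, (a < m)%nat -> 0 <= St (y a) (f a) (g a)).
  { intros a Ha. unfold St. destruct (Req_EM_T (y a) 0); [lra|]. destruct (Req_EM_T (g a) 0); [auto|lra]. }
  destruct (limit_arg _ _ _ HC (sumR_nonneg _ _ HSn) Hsum) as [Hs0 HB].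
  assert (Hgf : forall a, (a < m)%nat -> g a = 0 -> f a = 0).
  { intros a Ha Hga. pose proof (sumR_zero_each _ _ HSn ltac:(lra) a Ha) as E.
    unfold St in E. destruct (Req_EM_T (y a) 0) as [Hya|]; [apply Hacf; auto|].
    destruct (Req_EM_T (g a) 0); [auto|contradiction]. }
  exists (sumR m (fun a => kl_term (f a) (g a))). split; [apply KL_of; auto|].
  assert (D = Dg + sumR m (fun a => kl_term (f a) (g a)) + sumR m (fun a => Bt (y a) (f a) (g a))).
  { rewrite HD, HDg, <- !sumR_plus. apply sumR_ext. intros a Ha. apply ident; auto. }
  lra.
Qed.


Definition lsum {A} (l : list A) (F : A -> R) : R := fold_right Rplus 0 (map F l).

Lemma lsum_nil {A} (F : A -> R) : lsum [] F = 0.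
Proof. reflexivity. Qed.
Lemma lsum_cons {A} x l (F : A -> R) : lsum (x :: l) F = F x + lsum l F.
Proof. reflexivity. Qed.
Lemma lsum_app {A} l1 l2 (F : A -> R) : lsum (l1 ++ l2) F = lsum l1 F + lsum l2 F.
Proof. induction l1; unfold lsum in *; simpl; [ring|rewrite IHl1; ring]. Qed.
Lemma lsum_flat_map {A B} (G : A -> list B) l F : lsum (flat_map G l) F = lsum l (fun x => lsum (G x) F).
Proof. induction l; simpl; [reflexivity|]. rewrite lsum_app, IHl. reflexivity. Qed.
Lemma lsum_map {A B} (h : A -> B) l F : lsum (map h l) F = lsum l (fun x => F (h x)).
Proof. unfold lsum. rewrite map_map. reflexivity. Qed.
Lemma lsum_plus {A} l (F G : A -> R) : lsum l (fun x => F x + G x) = lsum l F + lsum l G.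
Proof. induction l; [unfold lsum; simpl; ring|]. rewrite !lsum_cons, IHl. ring. Qed.
Lemma lsum_scal {A} l c (F : A -> R) : lsum l (fun x => c * F x) = c * lsum l F.
Proof. induction l; [unfold lsum; simpl; ring|]. rewrite !lsum_cons, IHl. ring. Qed.
Lemma lsum_ext {A} l (F G : A -> R) : (forall x, In x l -> F x = G x) -> lsum l F = lsum l G.
Proof. induction l; intros H; [reflexivity|]. rewrite !lsum_cons, IHl, H; simpl; auto; intros; apply H; simpl; auto. Qed.
Lemma lsum_le {A} l (F G : A -> R) : (forall x, In x l -> F x <= G x) -> lsum l F <= lsum l G.
Proof. induction l; intros H; [unfold lsum; simpl; lra|]. rewrite !lsum_cons.
  pose proof (H a (or_introl eq_refl)). assert (lsum l F <= lsum l G) by (apply IHl; intros; apply H; simpl; auto). lra. Qed.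
Lemma lsum_nonneg {A} l (F : A -> R) : (forall x, In x l -> 0 <= F x) -> 0 <= lsum l F.
Proof. intros H. replace 0 with (lsum l (fun _ => 0)). apply lsum_le; auto.
  induction l; auto. rewrite lsum_cons, IHl; [ring|]. intros; apply H; simpl; auto. Qed.
Lemma lsum_const {A} l (c : R) : lsum l (fun _ : A => c) = INR (length l) * c.
Proof. induction l; [unfold lsum; simpl; ring|]. rewrite lsum_cons, IHl. simpl length. rewrite S_INR. ring. Qed.
Lemma lsum_swap {A B} (l1 : list A) (l2 : list B) F :
  lsum l1 (fun x => lsum l2 (fun y => F x y)) = lsum l2 (fun y => lsum l1 (fun x => F x y)).
Proof. induction l1.
  - rewrite (lsum_ext l2 (fun y => lsum [] (fun x => F x y)) (fun _ => 0)) by (intros; reflexivity).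
    rewrite lsum_const, lsum_nil. ring.
  - rewrite lsum_cons, IHl1. rewrite <- lsum_plus. apply lsum_ext; intros. rewrite lsum_cons. reflexivity. Qed.
Lemma lsum_single {A} l x (F : A -> R) : In x l -> (forall y, In y l -> 0 <= F y) -> F x <= lsum l F.
Proof. induction l; intros Hx H; [destruct Hx|]. rewrite lsum_cons. destruct Hx as [<-|Hx].
  - assert (0 <= lsum l F) by (apply lsum_nonneg; intros; apply H; simpl; auto). lra.
  - assert (0 <= F a) by (apply H; simpl; auto). assert (F x <= lsum l F) by (apply IHl; auto; intros; apply H; simpl; auto). lra. Qed.
Lemma lsum_seq m F : lsum (seq 0 m) F = sumR m F.
Proof. induction m; [reflexivity|]. rewrite seq_S, lsum_app, IHm. simpl. unfold lsum; simpl. ring. Qed.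

Lemma words_mem m n w : In w (words m n) -> length w = n /\ (forall a, In a w -> (a < m)%nat).
Proof. revert w; induction n; simpl; intros w H.
  - destruct H as [<-|[]]. simpl. split; auto. intros a [].
  - apply in_flat_map in H as [v [Hv Hw]]. apply in_map_iff in Hw as [a [<- Ha]].
    apply in_seq in Ha. destruct (IHn v Hv) as [H1 H2]. simpl. split; [lia|].
    intros b [<-|Hb]; [lia|auto]. Qed.
Lemma words_in m n w : length w = n -> (forall a, In a w -> (a < m)%nat) -> In w (words m n).
Proof. revert n; induction w; intros n Hl H; simpl in Hl; subst n; simpl; [auto|].
  apply in_flat_map. exists w. split. apply IHw; auto; intros; apply H; simpl; auto.
  apply in_map_iff. exists a. split; auto. apply in_seq. assert (a < m)%nat by (apply H; simpl; auto). lia. Qed.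
Lemma words_len m n : length (words m n) = (m ^ n)%nat.
Proof. induction n; simpl; auto. rewrite flat_map_concat_map, length_concat, map_map.
  rewrite <- IHn. clear IHn. induction (words m n); simpl; [lia|]. rewrite length_map, length_seq, IHl. lia. Qed.

Lemma word_prob_sum m n g : lsum (words m n) (word_prob g) = (sumR m g) ^ n.
Proof. induction n; simpl.
  - unfold lsum; simpl; ring.
  - rewrite lsum_flat_map. rewrite <- IHn, <- lsum_scal. apply lsum_ext. intros w _.
    rewrite lsum_map. simpl. rewrite <- lsum_seq. rewrite Rmult_comm, <- lsum_scal. apply lsum_ext; intros; ring. Qed.

Lemma count_ind m b h : (b < m)%nat -> sumR m (fun a => (if Nat.eqb b a then 1 else 0) * h a) = h b.
Proof. induction m; intros Hb; [lia|]. simpl. destruct (Nat.eq_dec b m) as [->|Hne].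
  - rewrite Nat.eqb_refl. rewrite (sumR_ext _ _ (fun _ => 0)).
    + assert (E : forall k, sumR k (fun _ => 0) = 0) by (induction k; simpl; [ring|rewrite IHk; ring]).
      rewrite E. ring.
    + intros a Ha. destruct (Nat.eqb_spec m a); [lia|ring].
  - rewrite IHm by lia. destruct (Nat.eqb_spec b m); [lia|ring]. Qed.

Lemma count_fold m w h : (forall a, In a w -> (a < m)%nat) -> lsum w h = sumR m (fun a => INR (count a w) * h a).
Proof. induction w; intros H.
  - simpl. unfold lsum; simpl. clear. induction m; simpl; [reflexivity|rewrite <- IHm; ring].
  - rewrite lsum_cons, IHw by (intros; apply H; simpl; auto).
    rewrite <- (count_ind m a h) by (apply H; simpl; auto). rewrite <- sumR_plus. apply sumR_ext.
    intros b _. simpl. destruct (Nat.eqb a b); [rewrite S_INR|]; ring. Qed.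

Lemma count_le a w : (count a w <= length w)%nat.
Proof. induction w; simpl; auto. destruct (Nat.eqb a0 a); lia. Qed.
Lemma count_in a w : (0 < count a w)%nat -> In a w.
Proof. induction w; simpl; [lia|]. destruct (Nat.eqb_spec a0 a); auto. Qed.

Lemma word_prob_ext g h w : (forall b, In b w -> g b = h b) -> word_prob g w = word_prob h w.
Proof. induction w; intros H; simpl; auto. rewrite IHw, H; simpl; auto; intros; apply H; simpl; auto. Qed.
Lemma word_prob_nonneg g w : (forall b, In b w -> 0 <= g b) -> 0 <= word_prob g w.
Proof. induction w; intros H; simpl; [lra|]. apply Rmult_le_pos; [apply H; simpl; auto|apply IHw; intros; apply H; simpl; auto]. Qed.
Lemma word_prob_zero g w b : In b w -> g b = 0 -> word_prob g w = 0.
Proof. induction w; intros Hb Hg; simpl; [destruct Hb|]. destruct Hb as [->|Hb]; [rewrite Hg; ring|rewrite IHw; auto; ring]. Qed.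
Lemma word_prob_exp g w : (forall b, In b w -> 0 < g b) -> word_prob g w = exp (lsum w (fun a => ln (g a))).
Proof. induction w; intros H; simpl.
  - unfold lsum; simpl. rewrite exp_0. reflexivity.
  - rewrite lsum_cons, exp_plus, exp_ln, IHw; auto; intros; apply H; simpl; auto. Qed.


Lemma INR_n_pos n : (1 <= n)%nat -> 0 < INR n.
Proof. intros; apply lt_0_INR; lia. Qed.

Lemma emp_nonneg w a : (1 <= length w)%nat -> 0 <= emp w a.
Proof. intros H. unfold emp. apply Rmult_le_pos; [apply pos_INR|left; apply Rinv_0_lt_compat, INR_n_pos; auto]. Qed.

Lemma emp_pmf m n w : In w (words m n) -> (1 <= n)%nat -> pmf m (emp w).
Proof.
  intros Hw Hn. destruct (words_mem _ _ _ Hw) as [Hl Ha]. split.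
  - intros; apply emp_nonneg; lia.
  - unfold emp. pose proof (count_fold m w (fun _ => 1) Ha) as E.
    rewrite lsum_const in E.
    rewrite (sumR_ext _ _ (fun a => / INR (length w) * (INR (count a w) * 1))) by (intros; unfold Rdiv; ring).
    rewrite sumR_scal, <- E. rewrite Hl. field. apply Rgt_not_eq, INR_n_pos; auto.
Qed.

Lemma word_kl m n f0 w : pmf m f0 -> In w (words m n) -> (1 <= n)%nat -> (forall b, In b w -> f0 b <> 0) ->
  exists D, KL m (emp w) f0 = Some D /\ word_prob f0 w = word_prob (emp w) w * exp (- INR n * D).
Proof.
  intros [Hf0 _] Hw Hn Hb. destruct (words_mem _ _ _ Hw) as [Hl Ha].
  assert (Hnp : 0 < INR n) by (apply INR_n_pos; auto).
  assert (Hpos0 : forall b, In b w -> 0 < f0 b) by (intros b Hb'; pose proof (Hf0 b (Ha b Hb')); pose proof (Hb b Hb'); lra).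
  assert (Hcnt : forall b, In b w -> (0 < count b w)%nat).
  { intros b Hb'. clear - Hb'. induction w; [destruct Hb'|]. simpl. destruct Hb' as [->|H].
    - rewrite Nat.eqb_refl. lia.
    - destruct (Nat.eqb a b); [lia|auto]. }
  assert (Hposf : forall b, In b w -> 0 < emp w b).
  { intros b Hb'. unfold emp. rewrite Hl. apply Rdiv_lt_0_compat; auto. apply lt_0_INR, Hcnt; auto. }
  assert (Hac : forall a, (a < m)%nat -> f0 a = 0 -> emp w a = 0).
  { intros a Ham Hfa. destruct (count a w) eqn:E.
    - unfold emp. rewrite E. simpl. unfold Rdiv; ring.
    - exfalso. apply (Hb a); auto. apply count_in. lia. }
  exists (sumR m (fun a => kl_term (emp w a) (f0 a))). split; [apply KL_of; auto|].
  rewrite !word_prob_exp by auto. rewrite <- exp_plus. f_equal.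
  rewrite !(count_fold m) by auto.
  assert (sumR m (fun a => INR (count a w) * ln (emp w a)) - sumR m (fun a => INR (count a w) * ln (f0 a))
          = INR n * sumR m (fun a => kl_term (emp w a) (f0 a))).
  { rewrite <- sumR_minus, <- sumR_scal. apply sumR_ext. intros a Ham.
    destruct (count a w) eqn:E.
    - assert (emp w a = 0) by (unfold emp; rewrite E; simpl; unfold Rdiv; ring).
      rewrite H, kl_term0. simpl. ring.
    - assert (Hin : In a w) by (apply count_in; lia).
      pose proof (Hposf a Hin). pose proof (Hpos0 a Hin).
      rewrite kl_termP by lra. rewrite lnd by lra.
      assert (INR n * emp w a = INR (S n0)) by (unfold emp; rewrite E, Hl; field; lra).
      rewrite <- H1. ring. }
  lra.
Qed.

Definition tk (n : nat) (k : list nat) : nat -> R := fun a => INR (nth a k 0%nat) / INR n.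

Lemma nth_map_seq m (F : nat -> nat) a : (a < m)%nat -> nth a (map F (seq 0 m)) 0%nat = F a.
Proof. intros H. rewrite (nth_indep _ _ (F 0%nat)) by (rewrite length_map, length_seq; lia).
  rewrite map_nth, seq_nth by lia. reflexivity. Qed.

Lemma indic_01 P : 0 <= indic P <= 1.
Proof. unfold indic. destruct (excluded_middle_informative P); lra. Qed.

Lemma types_bound m n w : In w (words m n) -> (1 <= n)%nat ->
  word_prob (emp w) w <= lsum (words (S n) m) (fun k => word_prob (tk n k) w * indic (sumR m (tk n k) = 1)).
Proof.
  intros Hw Hn. destruct (words_mem _ _ _ Hw) as [Hl Ha].
  assert (Hnp : 0 < INR n) by (apply INR_n_pos; auto).
  set (k0 := map (fun a => count a w) (seq 0 m)).
  assert (Htk : forall a, (a < m)%nat -> tk n k0 a = emp w a).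
  { intros a Ham. unfold tk, emp, k0. rewrite nth_map_seq, Hl; auto. }
  assert (Hk0 : In k0 (words (S n) m)).
  { apply words_in. unfold k0; rewrite length_map, length_seq; auto.
    intros x Hx. unfold k0 in Hx. apply in_map_iff in Hx as [a [<- _]]. pose proof (count_le a w). lia. }
  eapply Rle_trans; [|apply (lsum_single _ k0); auto].
  - apply Req_le. rewrite (word_prob_ext (tk n k0) (emp w)) by (intros; apply Htk; auto).
    rewrite (sumR_ext _ _ (emp w)) by auto. destruct (emp_pmf m n w Hw Hn) as [_ ->].
    unfold indic. destruct (excluded_middle_informative (1 = 1)); [ring|congruence].
  - intros k _. apply Rmult_le_pos; [|apply indic_01]. apply word_prob_nonneg. intros b _.
    unfold tk. unfold Rdiv. apply Rmult_le_pos; [apply pos_INR|left; apply Rinv_0_lt_compat; auto].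
Qed.

Lemma types_total m n : (1 <= n)%nat ->
  lsum (words m n) (fun w => lsum (words (S n) m) (fun k => word_prob (tk n k) w * indic (sumR m (tk n k) = 1)))
  <= (INR n + 1) ^ m.
Proof.
  intros Hn. rewrite lsum_swap.
  eapply Rle_trans with (lsum (words (S n) m) (fun _ => 1)).
  - apply lsum_le. intros k _.
    rewrite (lsum_ext _ _ (fun w => indic (sumR m (tk n k) = 1) * word_prob (tk n k) w)) by (intros; ring).
    rewrite lsum_scal, word_prob_sum. unfold indic.
    destruct (excluded_middle_informative (sumR m (tk n k) = 1)) as [->|]; [rewrite pow1|]; lra.
  - rewrite lsum_const, words_len, pow_INR, S_INR. lra.
Qed.


Lemma exp_le x y : x <= y -> exp x <= exp y.
Proof. intros [H| ->]; [left; apply exp_increasing; auto|lra]. Qed.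

Lemma l1_nonneg m f g : 0 <= l1 m f g.
Proof. apply sumR_nonneg. intros; apply Rabs_pos. Qed.

Theorem theorem1 (m : nat) (f0 : nat -> R) (q : (nat -> R) -> R) (L qbar : R)
  (P1 : (nat -> R) -> Prop)
  (Hf0 : pmf m f0) (Hqc : quasiconcave m q) (HL : lipschitz m q L)
  (Hq0 : q f0 < 0) (Hqbar : 0 < qbar)
  (HP1ne : exists f, P1 f) (HP1 : forall f, P1 f -> pmf m f /\ qbar <= q f)
  (cS cD : R) (HcS : exists f, pmf m f /\ cS < q f) (HcD : 0 <= cD)
  (fstar : nat -> R) (Hfstar : is_Iproj m q cS f0 fstar)
  (n : nat) (Hn : (1 <= n)%nat) :
  Pinf m n f0 (Gamma1 m q cS cD fstar) <=
  (INR n + 1) ^ m *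
  exp (- INR n * (cD + (Rmax (cS - q f0) 0) ^ 2 / (2 * L ^ 2))).
Proof.
  assert (HLp : 0 < L).
  { destruct HP1ne as [f1 Hf1]. destruct (HP1 f1 Hf1) as [Hp1 Hq1].
    pose proof (HL f1 f0 Hp1 Hf0). pose proof (l1_nonneg m f1 f0).
    assert (0 < Rabs (q f1 - q f0)) by (rewrite Rabs_pos_eq; lra).
    destruct (Rle_lt_dec L 0); auto. nra. }
  set (del := Rmax (cS - q f0) 0 ^ 2 / (2 * L ^ 2)).
  set (E := exp (- INR n * (cD + del))).
  destruct Hfstar as [Hfs_pmf [Hfs_q Hfs_min]].
  assert (Hana : forall f D, pmf m f -> Gamma1 m q cS cD fstar f -> KL m f f0 = Some D -> cD + del <= D).
  { intros f D Hf [HqF HKge] HK.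
    pose proof (Hfs_min f Hf HqF) as Hm. rewrite HK in Hm.
    destruct (KL m fstar f0) as [Dg|] eqn:HKg; [|destruct Hm]. simpl in Hm.
    destruct (pyth m f0 fstar f D Dg Hf0 Hfs_pmf Hf HK HKg) as [Dfg [HKfg Hle]].
    { intros t Ht. assert (X : pmf m (fun a => t * f a + (1 - t) * fstar a) /\ cS <= q (fun a => t * f a + (1 - t) * fstar a)).
      2:{ destruct X as [X1 X2]. pose proof (Hfs_min _ X1 X2) as X. try rewrite HKg in X. exact X. }
      split.
      - destruct Hf as [Hf1 Hf2]. destruct Hfs_pmf as [Hs1 Hs2]. split.
        + intros a Ha. pose proof (Hf1 a Ha). pose proof (Hs1 a Ha). nra.
        + rewrite sumR_plus, !sumR_scal, Hf2, Hs2. ring.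
      - pose proof (Hqc f fstar t Hf Hfs_pmf ltac:(lra)).
        eapply Rle_trans; [|exact H]. apply Rmin_glb; auto. }
    unfold KL_ge in HKge. rewrite HKfg in HKge. simpl in HKge.
    pose proof (pinsker m fstar f0 Dg Hfs_pmf Hf0 HKg) as Hpin.
    pose proof (HL fstar f0 Hfs_pmf Hf0) as HLip.
    pose proof (l1_nonneg m fstar f0) as Hl1.
    set (l := l1 m fstar f0) in *.
    assert (HR : 0 <= Rmax (cS - q f0) 0 <= L * l).
    { split; [apply Rmax_r|]. apply Rmax_lub; [|nra].
      pose proof (Rle_abs (q fstar - q f0)). lra. }
    assert (del <= l ^ 2 / 2).
    { unfold del. set (r := Rmax (cS - q f0) 0) in *.
      assert (r ^ 2 <= (L * l) ^ 2) by (destruct HR; apply pow_incr; auto).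
      apply (Rmult_le_reg_r (2 * L ^ 2)); [nra|].
      replace (r ^ 2 / (2 * L ^ 2) * (2 * L ^ 2)) with (r ^ 2) by (field; lra).
      replace (l ^ 2 / 2 * (2 * L ^ 2)) with ((L * l) ^ 2) by (field; lra). auto. }
    lra. }
  assert (Hword : forall w, In w (words m n) ->
     word_prob f0 w * indic (Gamma1 m q cS cD fstar (emp w)) <= E * word_prob (emp w) w).
  { intros w Hw. destruct (words_mem _ _ _ Hw) as [Hl Ha].
    assert (Hnn : 0 <= word_prob (emp w) w) by (apply word_prob_nonneg; intros; apply emp_nonneg; lia).
    assert (HE : 0 <= E) by (left; apply exp_pos).
    unfold indic. destruct (excluded_middle_informative (Gamma1 m q cS cD fstar (emp w))) as [HG|]; [|nra].
    destruct (classic (exists b, In b w /\ f0 b = 0)) as [[b [Hb Hb0]]|Hno].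
    - rewrite (word_prob_zero f0 w b Hb Hb0). nra.
    - destruct (word_kl m n f0 w Hf0 Hw Hn) as [D [HK Heq]].
      { intros b Hb Hb0. apply Hno. exists b; auto. }
      pose proof (Hana _ _ (emp_pmf m n w Hw Hn) HG HK).
      rewrite Heq. rewrite Rmult_1_r, Rmult_comm. apply Rmult_le_compat_r; auto.
      unfold E. apply exp_le. assert (0 < INR n) by (apply INR_n_pos; auto). nra. }
  change (lsum (words m n) (fun w => word_prob f0 w * indic (Gamma1 m q cS cD fstar (emp w))) <= (INR n + 1) ^ m * E).
  eapply Rle_trans; [apply lsum_le; exact Hword|].
  rewrite lsum_scal. rewrite Rmult_comm. apply Rmult_le_compat_r; [left; apply exp_pos|].
  eapply Rle_trans; [|apply (types_total m n Hn)].
  apply lsum_le. intros w Hw. apply types_bound; auto.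
Qed.
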